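(* There exists a universal constant $C > 0$ such that for all $p \in (0,1)$, all $n \in \mathbb{N}_+$ and every $z \in \{0,1\}^{2n}$ with an even number of ones, we have $\mathcal{D}_{p,2n}(z) \geq C \cdot \mu_{p,2n}(z)$.
   Context: $\mu_{p,m}$ is the product $p$-biased distribution on $\{0,1\}^m$ (each coordinate equals $1$ independently with probability $p$), and $\mu_{p,m}(z)$ is the probability of $z$. The pull-back distribution $\mathcal{D}_{p,2n}$ on $\{0,1\}^{2n}$ is the distribution of $z$ obtained as follows: draw a uniformly random $2$-to-$1$ map $\pi : [2n] \to [n]$ (every element of $[n]$ has exactly two preimages), draw $x \sim \mu_{p,n}$ independently, and set $z_i = x_{\pi(i)}$ for all $i \in [2n]$; $\mathcal{D}_{p,2n}(z)$ denotes the probability of $z$. *)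

(* Defs.v *)
From HB Require Import structures.
From mathcomp Require Import all_boot all_order all_algebra.
From mathcomp Require Import reals.
Set Implicit Arguments. Unset Strict Implicit. Unset Printing Implicit Defensive.
Import Order.TTheory GRing.Theory Num.Theory.
Local Open Scope ring_scope.

Definition mu (R : realType) (p : R) (m : nat) (z : {ffun 'I_m -> bool}) : R :=
  \prod_(i < m) (if z i then p else 1 - p).

Definition two_to_one (n : nat) : {set {ffun 'I_(2 * n) -> 'I_n}} :=
  [set f : {ffun 'I_(2 * n) -> 'I_n} | [forall j : 'I_n, #|[set i | f i == j]| == 2%N]].

(* D_{p,2n}(z): probability that z = x o pi with pi uniform 2-to-1 and x ~ mu_{p,n}. *)
Definition pullback (R : realType) (p : R) (n : nat) (z : {ffun 'I_(2 * n) -> bool}) : R :=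
  (#|two_to_one n|%:R)^-1 *
  \sum_(f in two_to_one n)
     \sum_(x : {ffun 'I_n -> bool} | [ffun i => x (f i)] == z) mu p x.

(* Main.v *)
Require Import Defs.
From HB Require Import structures.
From mathcomp Require Import all_boot all_order all_algebra all_fingroup.
From mathcomp Require Import reals.
From mathcomp Require Import zify ring lra.
Import Order.TTheory GRing.Theory Num.Theory.
Local Open Scope ring_scope.
Set Implicit Arguments. Unset Strict Implicit. Unset Printing Implicit Defensive.

Lemma muE (R : realType) (p : R) m (w : {ffun 'I_m -> bool}) :
  mu p w = p ^+ #|[set i | w i]| * (1 - p) ^+ (m - #|[set i | w i]|)%N.
Proof.
rewrite /mu (bigID (fun i => w i)) /=.
rewrite (eq_bigr (fun _ => p)); last by move=> i ->.
rewrite [X in _ * X](eq_bigr (fun _ => 1 - p)); last by move=> i /negbTE ->.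
rewrite !prodr_const.
have e1 : #|(fun i : 'I_m => w i)| = #|[set i | w i]| by rewrite cardsE.
have e2 : #|(fun i : 'I_m => ~~ w i)| = #|[set i | ~~ w i]| by rewrite cardsE.
rewrite e1 e2; congr (_ * _ ^+ _).
have hc := cardsC [set i | w i]; rewrite card_ord in hc.
have e3 : ~: [set i | w i] = [set i | ~~ w i] by apply/setP => i; rewrite !inE.
rewrite e3 in hc. have L : forall a b c : nat, (a + b = c)%N -> b = (c - a)%N by lia. exact: L _ _ _ hc.
Qed.

Lemma card_ones m k :
  #|[set x : {ffun 'I_m -> bool} | #|[set i | x i]| == k]| = 'C(m, k).
Proof.
have -> : [set x : {ffun 'I_m -> bool} | #|[set i | x i]| == k] =
   [set [ffun i : 'I_m => i \in (B : {set 'I_m})] | B in [set B : {set 'I_m} | #|B| == k]].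
  apply/setP => x; rewrite inE; apply/idP/imsetP.
    move=> hx; exists [set i | x i]; first by rewrite inE.
    by apply/ffunP => i; rewrite ffunE inE.
  case=> B; rewrite inE => hB ->.
  suff -> : [set i | [ffun i0 => i0 \in B] i] = B by [].
  by apply/setP => i; rewrite inE ffunE.
rewrite card_imset ?card_draws ?card_ord //.
move=> B1 B2 h; apply/setP => i.
by have := congr1 (fun f : {ffun 'I_m -> bool} => f i) h; rewrite !ffunE.
Qed.

Lemma ones_comp n (f : {ffun 'I_(2 * n) -> 'I_n}) (x : {ffun 'I_n -> bool}) :
  f \in two_to_one n ->
  #|[set i | [ffun i => x (f i)] i]| = (2 * #|[set j | x j]|)%N.
Proof.
rewrite inE => /forallP hf.
rewrite -sum1dep_card (partition_big f (fun j => x j)); last by move=> i; rewrite ffunE.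
rewrite -sum1dep_card big_distrr /=.
apply: eq_bigr => j hj; rewrite muln1.
rewrite -[in RHS](eqP (hf j)) -sum1dep_card; apply: eq_bigl => i.
rewrite ffunE; case: eqP => [-> |]; last by rewrite andbF.
by rewrite hj.
Qed.

Definition Ssum (R : realType) (p : R) n (w : {ffun 'I_(2 * n) -> bool}) : R :=
  \sum_(f in two_to_one n)
     \sum_(x : {ffun 'I_n -> bool} | [ffun i => x (f i)] == w) mu p x.

Lemma Ssum_perm (R : realType) (p : R) n (w : {ffun 'I_(2 * n) -> bool})
   (s : {perm 'I_(2 * n)}) :
  Ssum p [ffun i => w (s i)] = Ssum p w.
Proof.
rewrite /Ssum.
pose h := fun g : {ffun 'I_(2 * n) -> 'I_n} => [ffun i => g (s i)].
pose hi := fun g : {ffun 'I_(2 * n) -> 'I_n} => [ffun i => g ((s^-1)%g i)].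
have hK : cancel h hi by move=> g; apply/ffunP => i; rewrite !ffunE permKV.
have hiK : cancel hi h by move=> g; apply/ffunP => i; rewrite !ffunE permK.
rewrite [RHS](reindex hi); last by exists h => g _; [apply: hiK | apply: hK].
apply: eq_big => g.
  rewrite !inE; apply/forallP/forallP => H j; have := H j.
    suff -> : [set i | hi g i == j] = (s^-1)%g @^-1: [set i | g i == j] by rewrite card_preimset //; exact: perm_inj.
    by apply/setP => i; rewrite !inE ffunE.
  suff -> : [set i | hi g i == j] = (s^-1)%g @^-1: [set i | g i == j] by rewrite card_preimset //; exact: perm_inj.
  by apply/setP => i; rewrite !inE ffunE.
move=> _; apply: eq_bigl => x.
apply/eqP/eqP => H; apply/ffunP => i.
  have := congr1 (fun F : {ffun 'I_(2 * n) -> bool} => F ((s^-1)%g i)) H.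
  by rewrite !ffunE permKV.
have := congr1 (fun F : {ffun 'I_(2 * n) -> bool} => F (s i)) H.
by rewrite !ffunE permK.
Qed.

Lemma count_card m (w : {ffun 'I_m -> bool}) : count w (enum 'I_m) = #|[set i | w i]|.
Proof.
rewrite cardsE cardE /enum_mem size_filter /enum_mem count_filter.
by apply: eq_count => i; rewrite /= andbT.
Qed.

Lemma perm_exists m (w z : {ffun 'I_m -> bool}) :
  #|[set i | w i]| = #|[set i | z i]| -> exists s : 'S_m, w = [ffun i => z (s i)].
Proof.
move=> h.
have hp0 : perm_eq [seq w i | i <- enum 'I_m] [seq z i | i <- enum 'I_m].
  apply/seq.permP => a; rewrite (@count_map _ _ w a (enum 'I_m)) (@count_map _ _ z a (enum 'I_m)).
  have E : forall v : {ffun 'I_m -> bool},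
      count (preim v a) (enum 'I_m) =
      ((if a true then #|[set i | v i]| else 0) + (if a false then m - #|[set i | v i]| else 0))%N.
    move=> v; rewrite -count_card.
    have hs := count_predC v (enum 'I_m); rewrite size_enum_ord in hs.
    rewrite (@eq_count _ _ (fun i => (a true && v i) || (a false && ~~ v i))); last first.
      by move=> i /=; case: (v i); rewrite ?andbF ?orbF ?andbT.
    have L1 : forall a b c : nat, (a + b = c)%N -> c = (a + (c - a))%N by lia.
    have L2 : forall a b c : nat, (a + b = c)%N -> b = (0 + (c - a))%N by lia.
    case: (a true); case: (a false) => /=.
    - transitivity (count predT (enum 'I_m)); first by apply: eq_count => i; case: (v i).
      rewrite count_predT size_enum_ord; exact: L1 _ _ _ hs.
    - by rewrite addn0; apply: eq_count => i; case: (v i).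
    - exact: L2 _ _ _ hs.
    - transitivity (count pred0 (enum 'I_m)); first by apply: eq_count => i; case: (v i).
      by rewrite count_pred0.
  by rewrite !E h.
have hp : perm_eq [seq w i | i <- enum 'I_m] [tuple z i | i < m] := hp0.
case/tuple_permP: hp => s hs; exists s.
apply/ffunP => i; rewrite ffunE.
have /eq_in_map H : [seq w i | i <- enum 'I_m] = [seq tnth [tuple z i | i < m] (s i) | i <- enum 'I_m].
  by rewrite hs.
by rewrite H ?mem_enum // tnth_mktuple.
Qed.

Lemma T_nonempty n : (0 < n)%N -> exists f, f \in two_to_one n.
Proof.
case: n => // n _.
pose f := [ffun i : 'I_(2 * n.+1) => (inord (if (i < n.+1)%N then val i else (i - n.+1)%N) : 'I_n.+1)].
exists f; rewrite inE; apply/forallP => j.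
have hj := ltn_ord j.
have h1 : (j < 2 * n.+1)%N by lia.
have h2 : (j + n.+1 < 2 * n.+1)%N by lia.
have -> : [set i | f i == j] = [set Ordinal h1; Ordinal h2].
  apply/setP => i; rewrite !inE ffunE.
  have hi := ltn_ord i.
  rewrite -!val_eqE /= inordK; last by case: ifP; lia.
  case: ifP => H; apply/idP/idP; lia.
rewrite cards2; apply/eqP; congr S.
rewrite -val_eqE /=; apply/eqP; lia.
Qed.
Lemma bin_step n a c : (a <= c)%N ->
  ('C(n, a) * 'C(n, c.+1) <= 'C(n, a.+1) * 'C(n, c))%N.
Proof.
move=> hac.
have hpos : (0 < a.+1 * c.+1)%N by [].
rewrite -(leq_pmul2r hpos).
have e1 : ('C(n, a) * 'C(n, c.+1) * (a.+1 * c.+1) = ((a.+1) * (n - c)) * ('C(n,a) * 'C(n,c)))%N.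
  rewrite (_ : (a.+1 * (n - c) * ('C(n, a) * 'C(n, c)) = (a.+1 * 'C(n,a)) * ((n - c) * 'C(n,c)))%N); last by ring.
  rewrite -mul_bin_left; ring.
have e2 : ('C(n, a.+1) * 'C(n, c) * (a.+1 * c.+1) = ((n - a) * c.+1) * ('C(n,a) * 'C(n,c)))%N.
  rewrite (_ : ((n - a) * c.+1 * ('C(n, a) * 'C(n, c)) = ((n - a) * 'C(n,a)) * (c.+1 * 'C(n,c)))%N); last by ring.
  rewrite -mul_bin_left; ring.
rewrite e1 e2 leq_mul2r; apply/orP; right.
rewrite [X in (_ <= X)%N]mulnC; apply: leq_mul; lia.
Qed.

Lemma bin_logc n k d : (d <= k)%N ->
  ('C(n, k - d) * 'C(n, k + d) <= 'C(n, k) * 'C(n, k))%N.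
Proof.
elim: d => [|d IH] hd; first by rewrite subn0 addn0.
apply: leq_trans (IH (ltnW hd)).
have -> : (k - d = (k - d.+1).+1)%N by lia.
have -> : (k + d.+1 = (k + d).+1)%N by lia.
apply: bin_step; lia.
Qed.

Lemma bin_logc2 n k j : (j <= k.*2)%N ->
  ('C(n, j) * 'C(n, k.*2 - j) <= 'C(n, k) * 'C(n, k))%N.
Proof.
move=> hj.
case: (leqP j k) => hjk.
  have := @bin_logc n k (k - j) (leq_subr _ _).
  have -> : (k - (k - j) = j)%N by lia.
  by have -> : (k + (k - j) = k.*2 - j)%N by lia.
have := @bin_logc n k (j - k) (_ : (j - k <= k)%N).
have -> : (k - (j - k) = k.*2 - j)%N by lia.
have -> : (k + (j - k) = j)%N by lia.
by rewrite mulnC; apply; lia.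
Qed.

Lemma amgm (R : realType) (x y c : R) : 0 <= x -> 0 <= y -> 0 <= c ->
  x * y <= c * c -> x * y <= c * (x + y).
Proof.
move=> hx hy hc h.
case: (lerP x c) => hxc.
  apply: le_trans (_ : c * y <= _); first exact: ler_wpM2r.
  rewrite mulrDr lerDr; exact: mulr_ge0.
apply: (le_trans h); rewrite mulrDr; apply: ler_wpDr; first exact: mulr_ge0.
apply: ler_wpM2l => //; exact: ltW.
Qed.

Lemma binsum_le1 (R : realType) (p : R) n m : 0 <= p <= 1 ->
  \sum_(0 <= j < m) 'C(n,j)%:R * (p ^+ j * (1 - p) ^+ (n - j)) <= 1.
Proof.
move=> /andP [hp0 hp1].
set b := fun j => 'C(n,j)%:R * (p ^+ j * (1 - p) ^+ (n - j)).
have bge0 j : 0 <= b j.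
  rewrite /b; apply: mulr_ge0; first exact: ler0n.
  apply: mulr_ge0; apply: exprn_ge0; lra.
have h1 : \sum_(0 <= j < m) b j <= \sum_(0 <= j < m + n.+1) b j.
  rewrite (big_nat_widen _ _ (m + n.+1)) ?leq_addr //.
  rewrite [X in _ <= X]big_mkcond /= big_mkcond /=; apply: ler_sum => j _.
  by case: ifP.
apply: (le_trans h1).
have -> : \sum_(0 <= i < m + n.+1) b i =
          \sum_(0 <= i < m + n.+1 | true && (i < n.+1)%N) b i.
  rewrite [RHS]big_mkcond /=; apply: eq_big_nat => j hj.
  case: ifP => //; rewrite ltnNge => /negbFE hnj.
  by rewrite /b bin_small // mul0r.
rewrite -big_nat_widen ?leq_addl // big_mkord.
have : (1 - p + p) ^+ n = 1 by rewrite subrK expr1n.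
rewrite exprDn => <-; rewrite le_eqVlt; apply/orP; left; apply/eqP; apply: eq_bigr => i _.
by rewrite /b mulr_natl mulrC.
Qed.

Lemma scalar (R : realType) (p : R) n k : 0 <= p <= 1 -> (k <= n)%N ->
  'C(n.*2, k.*2)%:R * (p ^+ k.*2 * (1 - p) ^+ (n.*2 - k.*2)%N)
   <= 2 * ('C(n,k)%:R * (p ^+ k * (1 - p) ^+ (n - k)%N)).
Proof.
move=> hp hkn; have /andP [hp0 hp1] := hp.
set q := 1 - p.
pose b := fun j => 'C(n,j)%:R * (p ^+ j * q ^+ (n - j)) : R.
have bge0 j : 0 <= b j.
  rewrite /b; apply: mulr_ge0; first exact: ler0n.
  apply: mulr_ge0; apply: exprn_ge0; rewrite /q; lra.
have term j : (j <= k.*2)%N ->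
   ('C(n,j) * 'C(n,k.*2 - j))%N%:R * (p ^+ k.*2 * q ^+ (n.*2 - k.*2)%N) = b j * b (k.*2 - j)%N.
  move=> hj; rewrite /b.
  case: (leqP j n) => hjn; last by rewrite bin_small // mul0n !mul0r.
  case: (leqP (k.*2 - j) n) => hjn2; last by rewrite (bin_small hjn2) muln0 mul0r mul0r mulr0.
  rewrite natrM.
  have e1 : p ^+ k.*2 = p ^+ j * p ^+ (k.*2 - j)%N by rewrite -exprD subnKC.
  have e2 : q ^+ (n.*2 - k.*2)%N = q ^+ (n - j)%N * q ^+ (n - (k.*2 - j))%N.
    by rewrite -exprD; congr (q ^+ _); lia.
  rewrite e1 e2; ring.
have conv : 'C(n.*2, k.*2)%:R * (p ^+ k.*2 * q ^+ (n.*2 - k.*2)%N)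
     = \sum_(j < k.*2.+1) b j * b (k.*2 - j)%N.
  rewrite -{1}[n.*2]addnn -binomial.Vandermonde natr_sum mulr_suml.
  by apply: eq_bigr => j _; apply: term; rewrite -ltnS.
have lc j : (j <= k.*2)%N -> b j * b (k.*2 - j)%N <= b k * b k.
  move=> hj; rewrite -term //.
  have tk := term k (_ : (k <= k.*2)%N).
  have e : (k.*2 - k = k)%N by lia.
  rewrite e in tk; rewrite -tk; last by lia.
  apply: ler_wpM2r.
    apply: mulr_ge0; apply: exprn_ge0; rewrite /q; lra.
  by rewrite ler_nat; apply: bin_logc2.
rewrite conv.
apply: le_trans (_ : \sum_(j < k.*2.+1) b k * (b j + b (k.*2 - j)%N) <= _).
  apply: ler_sum => j _; apply: amgm => //; apply: lc; rewrite -ltnS; exact: ltn_ord.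
rewrite -mulr_sumr big_split /=.
have -> : \sum_(i < k.*2.+1) b (k.*2 - i)%N = \sum_(i < k.*2.+1) b i.
  rewrite -(big_mkord xpredT b) big_rev_mkord subn0; apply: eq_bigr => i _; congr b; lia.
have hs : \sum_(i < k.*2.+1) b i <= 1.
  by rewrite -(big_mkord xpredT b); apply: binsum_le1.
apply: le_trans (_ : b k * (1 + 1) <= _).
  by apply: ler_wpM2l => //; apply: lerD.
by rewrite /b le_eqVlt; apply/orP; left; apply/eqP; ring.
Qed.

Theorem mainTheorem2 (R : realType) :
  exists C : R, 0 < C /\
    forall (p : R), 0 < p < 1 ->
    forall (n : nat), (0 < n)%N ->
    forall z : {ffun 'I_(2 * n) -> bool},
      ~~ odd #|[set i | z i]| ->
      C * mu p z <= pullback p z.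
Proof.
exists (1/2); split; first lra.
move=> p /andP[hp0 hp1] n hn z hodd.
set c := #|[set i | z i]|.
set k := c./2.
have hc : c = k.*2.
  by rewrite /k -[c in LHS]odd_double_half (negbTE hodd) add0n.
have hcm : (c <= 2 * n)%N.
  by have := max_card (mem [set i | z i]); rewrite card_ord.
have hkn : (k <= n)%N by lia.
have hT : (0 < #|two_to_one n|)%N.
  by case: (T_nonempty hn) => f hf; apply/card_gt0P; exists f.
set T := two_to_one n.
pose B : R := 'C(n,k)%:R * (p ^+ k * (1 - p) ^+ (n - k)%N).
pose C2 : R := 'C(n.*2, k.*2)%:R.
have Hs : \sum_(w : {ffun 'I_(2 * n) -> bool} | #|[set i | w i]| == k.*2) Ssum p w = C2 * Ssum p z.
  rewrite (eq_bigr (fun _ => Ssum p z)); last first.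
    move=> w /eqP hw.
    have hwz : #|[set i | w i]| = #|[set i | z i]| by rewrite hw -/c hc.
    have [s ->] := perm_exists hwz; exact: Ssum_perm.
  rewrite sumr_const mulr_natl /C2; congr (_ *+ _).
  have := card_ones (2 * n) k.*2; rewrite cardsE => ->.
  by rewrite mul2n.
have Hs2 : \sum_(w : {ffun 'I_(2 * n) -> bool} | #|[set i | w i]| == k.*2) Ssum p w = #|T|%:R * B.
  rewrite /Ssum exchange_big /=.
  rewrite (eq_bigr (fun _ => B)); last first.
    move=> f hf.
    rewrite (exchange_big_dep xpredT) //=.
    transitivity (\sum_(x : {ffun 'I_n -> bool} | #|[set j | x j]| == k) mu p x).
      rewrite [RHS]big_mkcond; apply: eq_bigr => x _.
      have E : (#|[set i | [ffun i => x (f i)] i]| == k.*2) = (#|[set j | x j]| == k).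
        by rewrite ones_comp // -mul2n eqn_pmul2l.
      case: ifP => hx.
        rewrite (eq_bigl (fun w => w == [ffun i => x (f i)])) ?big_pred1_eq //.
        move=> w; apply/andP/eqP => [[_ /eqP <-] // | ->].
        by rewrite E hx eqxx.
      apply: big_pred0 => w /=; apply/negbTE/andP => -[hP /eqP hw]; move: hP.
      by rewrite -hw E hx.
    rewrite (eq_bigr (fun _ => p ^+ k * (1 - p) ^+ (n - k)%N)); last first.
      by move=> x /eqP hx; rewrite muE hx.
    rewrite sumr_const /B mulr_natl; congr (_ *+ _).
    by have := card_ones n k; rewrite cardsE.
  by rewrite sumr_const mulr_natl.
have key : C2 * Ssum p z = #|T|%:R * B by rewrite -Hs Hs2.
have sc := scalar (p := p) (_ : 0 <= p <= 1) hkn.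
have hmu : mu p z = p ^+ k.*2 * (1 - p) ^+ (n.*2 - k.*2)%N.
  rewrite muE -/c hc; congr (_ * _ ^+ _); by rewrite mul2n.
have C2pos : 0 < C2 by rewrite /C2 ltr0n bin_gt0 leq_double.
have Tpos : 0 < (#|T|%:R : R) by rewrite ltr0n.
change (pullback p z) with ((#|T|%:R)^-1 * Ssum p z).
have eS : (#|T|%:R : R)^-1 * Ssum p z = B / C2.
  have -> : Ssum p z = #|T|%:R * B / C2.
    by rewrite -key; field; rewrite gt_eqF.
  by field; rewrite -/C2 !gt_eqF.
rewrite eS hmu ler_pdivlMr //.
have : C2 * (p ^+ k.*2 * (1 - p) ^+ (n.*2 - k.*2)%N) <= 2 * B.
  by apply: sc; rewrite (ltW hp0) (ltW hp1).
lra.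
Qed.
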